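(* Let $k$ be an odd positive integer and write $k=ff'$ with positive integers $f,f'$ such that $1<f<k$. If there exist coprime integers $x,y$ with $x^2-(k^2+1)y^2=f'^2$, then $f'$ is not a prime power (i.e. $f'$ is not of the form $p^a$ with $p$ prime and $a\ge 1$). *)

(* Defs.v *)
From Stdlib Require Import ZArith Znumtheory.
Open Scope Z_scope.

Definition is_prime_power (n : Z) : Prop :=
  exists p a : Z, prime p /\ 1 <= a /\ n = p ^ a.

(* Main.v *)
Require Import Defs.
From Stdlib Require Import ZArith Znumtheory Lia Psatz.
Open Scope Z_scope.

Lemma gcd1_of (a b : Z) : (forall d, (d | a) -> (d | b) -> (d | 1)) -> Z.gcd a b = 1.
Proof.
  intro H. apply Z.divide_1_r_nonneg. apply Z.gcd_nonneg.
  apply H; [apply Z.gcd_divide_l | apply Z.gcd_divide_r].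
Qed.

Lemma descent (k : Z) : 1 <= k -> forall n : nat, forall X Y M,
  Z.abs Y <= Z.of_nat n -> Z.gcd X Y = 1 -> X^2 - (k^2+1)*Y^2 = M ->
  Z.abs M <= k -> Z.abs M = 1.
Proof.
  intros Hk n. induction n as [|n IH]; intros X0 Y0 M Hn Hg HE HM.
  - assert (Y0 = 0) by lia. subst Y0. rewrite Z.gcd_0_r in Hg.
    assert (X0^2 = 1) by (destruct (Z.abs_spec X0); nia). lia.
  - set (X := Z.abs X0). set (Y := Z.abs Y0).
    assert (HgXY : Z.gcd X Y = 1) by (unfold X, Y; rewrite Z.gcd_abs_l, Z.gcd_abs_r; auto).
    assert (HE' : X^2 - (k^2+1)*Y^2 = M).
    { assert (X^2 = X0^2) by (unfold X; destruct (Z.abs_spec X0); nia).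
      assert (Y^2 = Y0^2) by (unfold Y; destruct (Z.abs_spec Y0); nia). lia. }
    assert (HX : 0 <= X) by (apply Z.abs_nonneg).
    assert (HY : 0 <= Y) by (apply Z.abs_nonneg).
    destruct (Z.eq_dec Y 0) as [Y0z|Ynz].
    + rewrite Y0z, Z.gcd_0_r in HgXY. assert (X = 1) by lia. replace M with 1 by (rewrite <- HE', H, Y0z; ring). reflexivity.
    + assert (Hlt : Z.abs (X - k*Y) < Y).
      { destruct (Z.le_gt_cases 0 (X - k*Y)).
        - rewrite Z.abs_eq by lia.
          destruct (Z.lt_ge_cases X ((k+1)*Y)); [lia|].
          exfalso. assert (A1 : ((k+1)*Y)^2 <= X^2).
          { apply Z.pow_le_mono_l. split; [apply Z.mul_nonneg_nonneg; lia | lia]. }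
          assert (A2 : 1^2 <= Y^2) by (apply Z.pow_le_mono_l; lia).
          assert (A3 : k*1 <= k*Y^2) by (apply Z.mul_le_mono_nonneg_l; lia).
          assert (A4 : ((k+1)*Y)^2 = (k^2+1)*Y^2 + 2*(k*Y^2)) by ring. lia.
        - rewrite Z.abs_neq by lia.
          destruct (Z.lt_ge_cases ((k-1)*Y) X); [lia|].
          exfalso. assert (A1 : X^2 <= ((k-1)*Y)^2) by (apply Z.pow_le_mono_l; lia).
          assert (A2 : 1^2 <= Y^2) by (apply Z.pow_le_mono_l; lia).
          assert (A3 : k*1 <= k*Y^2) by (apply Z.mul_le_mono_nonneg_l; lia).
          assert (A4 : ((k-1)*Y)^2 = (k^2+1)*Y^2 - 2*(k*Y^2)) by ring. lia. }
      pose proof (IH (-k*X + (k^2+1)*Y) (X - k*Y) (-M)) as R.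
      rewrite !Z.abs_opp in R. apply R.
      * clear -Hlt Hn. unfold Y in *. rewrite Nat2Z.inj_succ in Hn. lia.
      * apply gcd1_of. intros d H1 H2. rewrite <- HgXY. apply Z.gcd_greatest.
        -- assert (X = (X - k*Y) + k*((-k*X + (k^2+1)*Y) + k*(X-k*Y))) by ring.
           rewrite H. apply Z.divide_add_r; auto. apply Z.divide_mul_r.
           apply Z.divide_add_r; auto. apply Z.divide_mul_r; auto.
        -- assert (Y = (-k*X + (k^2+1)*Y) + k*(X-k*Y)) by ring.
           rewrite H. apply Z.divide_add_r; auto. apply Z.divide_mul_r; auto.
      * rewrite <- HE'. ring.
      * exact HM.
Qed.

Lemma rel_prime_pow (p c : Z) : rel_prime p c -> forall n, 0 <= n -> rel_prime (p^n) c.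
Proof.
  intros H. apply natlike_ind.
  - rewrite Z.pow_0_r. exact (rel_prime_1 c).
  - intros n Hn IH. rewrite Z.pow_succ_r by lia.
    apply rel_prime_sym, rel_prime_mult; apply rel_prime_sym; auto.
Qed.

Lemma case_big (k f f' x y t : Z) :
  0 < f -> 1 < f -> f < f' -> k = f * f' ->
  Z.gcd x y = 1 -> x ^ 2 - (k ^ 2 + 1) * y ^ 2 = f' ^ 2 ->
  x - y = t * f'^2 -> False.
Proof.
  intros Hf Hf1 Hff Hk Hg HE Ht.
  assert (Hx : x = y + t*f'^2) by lia.
  assert (Hq : f'^2 * (t * (x+y)) = f'^2 * (1 + f^2*y^2)).
  { assert (HX2 : x^2 = f'^2 + (k^2+1)*y^2) by lia.
    replace (f'^2 * (t * (x+y))) with (x^2 - y^2) by (rewrite Hx; ring).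
    rewrite HX2. subst k. ring. }
  apply Z.mul_reg_l in Hq; [| clear -Hf Hff; nia].
  assert (HN : (f^2*y - t)^2 - (k^2+1)*t^2 = -f^2).
  { assert (E: (f^2*y - t)^2 - (k^2+1)*t^2 = -f^2 + f^2*(1 + f^2*y^2 - t*(x+y)))
      by (subst k x; ring).
    rewrite E, Hq. ring. }
  assert (Hg2 : Z.gcd (f^2*y - t) t = 1).
  { apply gcd1_of. intros d H1 H2.
    assert (Hd : (d | f^2*y)).
    { assert (f^2*y = (f^2*y - t) + t) by ring. rewrite H. apply Z.divide_add_r; auto. }
    assert (Hd2 : (d | 1 + f^2*y^2)) by (rewrite <- Hq; apply Z.divide_mul_l; auto).
    assert (1 = (1 + f^2*y^2) - (f^2*y)*y) by ring. rewrite H.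
    apply Z.divide_sub_r; auto. apply Z.divide_mul_l; auto. }
  assert (Hkp : 1 <= k) by (clear -Hk Hf Hff; nia).
  pose proof (descent k Hkp (Z.to_nat (Z.abs t)) (f^2*y - t) t (-f^2)) as D.
  rewrite Z2Nat.id in D by (clear; lia).
  assert (Hsq : 0 <= f^2) by (clear -Hf; nia).
  assert (Z.abs (-f^2) = 1).
  { apply D; [clear; lia | exact Hg2 | exact HN |].
    rewrite Z.abs_opp, Z.abs_eq by exact Hsq. subst k. clear -Hf Hff. nia. }
  rewrite Z.abs_opp, Z.abs_eq in H by exact Hsq. clear -H Hf1. nia.
Qed.

Theorem lemma3p3 (k f f' : Z) :
  0 < k -> Z.odd k = true ->
  0 < f -> 0 < f' -> k = f * f' -> 1 < f -> f < k ->
  (exists x y : Z, Z.gcd x y = 1 /\ x ^ 2 - (k ^ 2 + 1) * y ^ 2 = f' ^ 2) ->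
  ~ is_prime_power f'.
Proof.
  intros Hk Hodd Hf Hf' Hkf Hf1 Hfk [x [y [Hg HE]]] [p [a [Hp [Ha Hpa]]]].
  assert (Hf'1 : 1 < f') by (subst k; clear -Hf Hfk; nia).
  destruct (Z.le_gt_cases f' f) as [Hle|Hlt].
  - assert (Hkp : 1 <= k) by lia.
    pose proof (descent k Hkp (Z.to_nat (Z.abs y)) x y (f'^2)) as D.
    rewrite Z2Nat.id in D by lia.
    assert (Z.abs (f'^2) = 1) by (apply D; auto; try lia; rewrite Z.abs_eq; nia).
    rewrite Z.abs_eq in H by nia. nia.
  - assert (Hp2 : p <> 2).
    { intro E. subst p. assert (Hd : (2 | k)).
      { rewrite Hkf, Hpa. apply Z.divide_mul_r.
        replace a with ((a - 1) + 1) by ring. rewrite Z.pow_add_r by lia.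
        apply Z.divide_mul_r. rewrite Z.pow_1_r. apply Z.divide_refl. }
      destruct Hd as [m Hm]. rewrite Hm, Z.odd_mul in Hodd. simpl in Hodd.
      rewrite Bool.andb_false_r in Hodd. discriminate. }
    assert (Hprod : (x - y) * (x + y) = f'^2 * (1 + f^2*y^2)).
    { assert (HX2 : x^2 = f'^2 + (k^2+1)*y^2) by lia.
      replace ((x - y) * (x + y)) with (x^2 - y^2) by ring.
      rewrite HX2. subst k. ring. }
    assert (Hf2 : f'^2 = p^(2*a)).
    { rewrite Hpa, <- Z.pow_mul_r by lia. f_equal. ring. }
    assert (Hpg : 1 < p) by (destruct Hp; auto).
    assert (Hnot : ~ (p | x - y) \/ ~ (p | x + y)).
    { destruct (Zdivide_dec p (x - y)) as [H1|H1]; [|left; auto].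
      destruct (Zdivide_dec p (x + y)) as [H2|H2]; [|right; auto].
      exfalso.
      assert (H2x : (p | 2 * x)).
      { replace (2*x) with ((x - y) + (x + y)) by ring. apply Z.divide_add_r; auto. }
      assert (H2y : (p | 2 * y)).
      { replace (2*y) with ((x + y) - (x - y)) by ring. apply Z.divide_sub_r; auto. }
      assert (Hp2n : ~ (p | 2)).
      { intro Hd. apply Z.divide_pos_le in Hd; [|lia].
        assert (p = 2) by lia. auto. }
      assert (Hx : (p | x)) by (destruct (prime_mult p Hp 2 x H2x); tauto).
      assert (Hy : (p | y)) by (destruct (prime_mult p Hp 2 y H2y); tauto).
      assert (Hd1 : (p | 1)) by (rewrite <- Hg; apply Z.gcd_greatest; auto).
      apply Z.divide_pos_le in Hd1; lia. }
    destruct Hnot as [N|N].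
    + assert (Hd : (f'^2 | x + y)).
      { apply Gauss with (x - y).
        - rewrite Hprod. apply Z.divide_mul_l, Z.divide_refl.
        - rewrite Hf2. apply rel_prime_pow; [apply prime_rel_prime; auto | lia]. }
      destruct Hd as [t Ht].
      apply (case_big k f f' x (-y) t); auto.
      * rewrite Z.gcd_opp_r; auto.
      * rewrite <- HE. ring.
      * rewrite <- Ht. ring.
    + assert (Hd : (f'^2 | x - y)).
      { apply Gauss with (x + y).
        - rewrite Z.mul_comm, Hprod. apply Z.divide_mul_l, Z.divide_refl.
        - rewrite Hf2. apply rel_prime_pow; [apply prime_rel_prime; auto | lia]. }
      destruct Hd as [t Ht].
      apply (case_big k f f' x y t); auto.
Qed.
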